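(* Let $q\geq2$ be an integer and fix a real number $c>0$. Put $a_n=\frac{n(q-1)}{2q}\log(n(q-1))$ and $b_n=\frac{n(q-1)}{2q}$. Then $$\liminf_{n\to\infty}\Vert \nu_n^{*\lfloor a_n-cb_n\rfloor}-\pi_n\Vert_{TV}\geq 1-4qe^{-c}.$$
   Context: For integers $n\geq1$, $q\geq2$, the Hamming scheme $H(n,q)$ is the graph with vertex set $X_n=\{0,1,\dots,q-1\}^n$ in which $x$ and $x'$ are adjacent iff they differ in exactly one coordinate. The simple random walk has transition probability $p_n(x,x')=\frac{1}{n(q-1)}$ if $x,x'$ are adjacent and $0$ otherwise. Let $p_n^{(k)}$ denote the $k$-step transition probability ($p_n^{(0)}(x,x')=\delta_{x,x'}$), $x^{(0)}=(0,\dots,0)$, and $\nu_n^{*k}(x)=p_n^{(k)}(x^{(0)},x)$. $\pi_n$ is the uniform probability measure on $X_n$. For measures $\mu,\nu$ on $X_n$, $\Vert\mu-\nu\Vert_{TV}=\max_{S\subset X_n}|\mu(S)-\nu(S)|$. $\lfloor\alpha\rfloor$ is the greatest integer $\leq\alpha$. *)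

(* Defs.v *)
From Stdlib Require Import Reals.
From mathcomp Require Import all_boot.
Set Implicit Arguments. Unset Strict Implicit. Unset Printing Implicit Defensive.

Local Open Scope R_scope.

Definition HX (n q : nat) : finType := {ffun 'I_n -> 'I_q}.

Definition hadj (n q : nat) (x y : HX n q) : bool :=
  #|[set i : 'I_n | x i != y i]| == 1%N.

Definition hp (n q : nat) (x y : HX n q) : R :=
  if hadj x y then / (INR n * (INR q - 1)) else 0.

Fixpoint hpk {n q : nat} (k : nat) (x y : HX n q) {struct k} : R :=
  match k with
  | O => if x == y then 1 else 0
  | S k' => \big[Rplus/0]_(z : HX n q) (hpk k' x z * hp z y)
  end.

Definition horigin (n q : nat) (Hq : (0 < q)%N) : HX n q :=
  [ffun _ => Ordinal Hq].

Definition hnu (n q : nat) (Hq : (0 < q)%N) (k : nat) (x : HX n q) : R :=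
  hpk k (horigin n Hq) x.

Definition hpi (n q : nat) (x : HX n q) : R := / INR (q ^ n).

Definition hmeas (n q : nat) (mu : HX n q -> R) (S : {set HX n q}) : R :=
  \big[Rplus/0]_(x in S) mu x.

Definition TV (n q : nat) (mu nu : HX n q -> R) : R :=
  \big[Rmax/0]_(S : {set HX n q}) Rabs (hmeas mu S - hmeas nu S).

(* floor of a real number as a natural number (floor, truncated at 0) *)
Definition floorN (r : R) : nat := Z.to_nat (Int_part r).

(* Main.v *)
Require Import Defs.
From Stdlib Require Import Reals Lra ZArith.
From mathcomp Require Import all_boot.
From mathcomp Require Import Rstruct.
Set Implicit Arguments. Unset Strict Implicit. Unset Printing Implicit Defensive.
Local Open Scope R_scope.

Lemma sumif (T : finType) (w : T) (F : T -> R) :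
  \big[Rplus/0]_(v : T) (if v == w then F v else 0) = F w.
Proof. by rewrite -big_mkcond big_pred1_eq. Qed.

Lemma bigD1R (T : finType) (j : T) (F : T -> R) :
  \big[Rplus/0]_(i : T) F i = F j + \big[Rplus/0]_(i : T | i != j) F i.
Proof. exact: (bigD1 j). Qed.

Lemma sumif' (T : finType) (w : T) (F : T -> R) :
  \big[Rplus/0]_(v : T) (if v != w then F v else 0) = \big[Rplus/0]_v F v - F w.
Proof.
rewrite (bigD1 w) //= [X in _ = X - _](bigD1 w) //= eqxx /=.
rewrite (eq_bigr F); first by ring.
by move=> v ->.
Qed.


Lemma sum_const (T : finType) (c : R) : \big[Rplus/0]_(v : T) c = INR #|T| * c.
Proof.
rewrite big_const; elim: #|_| => [|k IH]; first by rewrite /=; ring.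
rewrite [iter _ _ _]/= IH S_INR; ring.
Qed.

Lemma sum_lin (T : finType) (C a b : R) (G H : T -> R) :
  \big[Rplus/0]_(v : T) (C + a * G v + b * H v) =
  INR #|T| * C + a * \big[Rplus/0]_v G v + b * \big[Rplus/0]_v H v.
Proof. by rewrite !big_split /= sum_const -!big_distrr. Qed.

Lemma sum_le (T : finType) (F G : T -> R) : (forall v, F v <= G v) ->
  \big[Rplus/0]_(v : T) F v <= \big[Rplus/0]_v G v.
Proof.
move=> H; apply: (big_ind2 (fun a b => a <= b)) => //; first lra.
move=> *; lra.
Qed.

Lemma sum_ge0 (T : finType) (F : T -> R) : (forall v, 0 <= F v) ->
  0 <= \big[Rplus/0]_(v : T) F v.
Proof.
move=> H; apply: (big_ind (fun a => 0 <= a)) => //; first lra.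
move=> *; lra.
Qed.

Section Walk.
Variables (n q : nat).
Implicit Types x y : HX n q.

Definition upd x (i : 'I_n) (v : 'I_q) : HX n q := [ffun j => if j == i then v else x j].

Lemma upd_char x y i v : ((v != x i) && (y == upd x i v)) =
   ([set j | x j != y j] == [set i]) && (v == y i).
Proof.
apply/idP/idP.
- move=> /andP [vx /eqP ->]; rewrite !ffunE eqxx eqxx andbT.
  apply/eqP/setP => j; rewrite !inE ffunE.
  case: (eqVneq j i) => [->|ji]; first by rewrite eq_sym.
  by rewrite eqxx.
- move=> /andP [/eqP D /eqP ->].
  have Hi : x i != y i by have := set11 i; rewrite -D inE.
  rewrite eq_sym Hi /=; apply/eqP/ffunP => j; rewrite ffunE.
  case: (eqVneq j i) => [->//|ji].
  have : j \notin [set i] by rewrite inE.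
  by rewrite -D inE negbK => /eqP.
Qed.

Lemma ind_adj x y : (if hadj x y then 1 else 0) =
  \big[Rplus/0]_i \big[Rplus/0]_v (if (v != x i) && (y == upd x i v) then 1 else 0).
Proof.
under eq_bigr => i _ do under eq_bigr => v _ do rewrite upd_char.
have E i : \big[Rplus/0]_v (if ([set j | x j != y j] == [set i]) && (v == y i) then 1 else 0)
   = if [set j | x j != y j] == [set i] then 1 else 0.
  case: ifP => _ /=; first by rewrite (sumif (y i) (fun _ => 1)).
  by rewrite big1.
rewrite (eq_bigr _ (fun i _ => E i)) /hadj.
case: (@cards1P _ [set j | x j != y j]) => [[i0 ->]|N].
- symmetry; rewrite (eq_bigr (fun i => if i == i0 then 1 else 0)).
    exact: (sumif i0 (fun _ => 1)).
  move=> i _.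
  have -> : ([set i0] == [set i]) = (i == i0) by apply/eqP/eqP => [/set1_inj->|->].
  by [].
- rewrite big1 // => i _; case: eqP => // D; exfalso; apply: N; by exists i.
Qed.

Lemma hp_sum x (F : HX n q -> R) : \big[Rplus/0]_y (hp x y * F y) =
  / (INR n * (INR q - 1)) *
  \big[Rplus/0]_i \big[Rplus/0]_v (if v != x i then F (upd x i v) else 0).
Proof.
have E y : hp x y * F y = / (INR n * (INR q - 1)) * ((if hadj x y then 1 else 0) * F y).
  by rewrite /hp; case: hadj; ring.
rewrite (eq_bigr _ (fun y _ => E y)) -big_distrr /=; congr (_ * _).
under eq_bigr => y _ do rewrite ind_adj big_distrl /=.
rewrite exchange_big /=; apply: eq_bigr => i _.
under eq_bigr => y _ do rewrite big_distrl /=.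
rewrite exchange_big /=; apply: eq_bigr => v _.
case: (v != x i) => /=.
- rewrite -(sumif (upd x i v) F); apply: eq_bigr => y _; case: eqP => _; ring.
- by rewrite big1 // => y _; ring.
Qed.


Hypothesis Hq : (0 < q)%N.

Definition gq (a : 'I_q) : R := if (a : nat) == 0%N then INR q - 1 else -1.
Definition ff x : R := \big[Rplus/0]_i gq (x i).
Definition z0 : 'I_q := Ordinal Hq.

Lemma gq_z0 (v : 'I_q) : gq v = -1 + 1 * (if v == z0 then INR q else 0) + 0 * 0.
Proof.
rewrite /gq; have -> : ((v : nat) == 0%N) = (v == z0) by [].
case: (v == z0); ring.
Qed.

Lemma sum_g : \big[Rplus/0]_v gq v = 0.
Proof.
rewrite (eq_bigr _ (fun v _ => gq_z0 v)) (sum_lin _ _ _ (fun v => if v == z0 then INR q else 0) (fun _ => 0)) sum_const.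
rewrite (sumif z0 (fun _ => INR q)) card_ord; ring.
Qed.

Lemma sum_g2 : \big[Rplus/0]_v gq v ^ 2 = INR q * (INR q - 1).
Proof.
have E v : gq v ^ 2 = 1 + 1 * (if v == z0 then INR q * (INR q - 2) else 0) + 0 * 0.
  rewrite /gq; have -> : ((v : nat) == 0%N) = (v == z0) by [].
  case: (v == z0); ring.
rewrite (eq_bigr _ (fun v _ => E v)) (sum_lin _ _ _ (fun v => if v == z0 then INR q * (INR q - 2) else 0) (fun _ => 0)) sum_const.
rewrite (sumif z0 (fun _ => INR q * (INR q - 2))) card_ord; ring.
Qed.

Lemma ff_upd x i v : ff (upd x i v) = ff x - gq (x i) + gq v.
Proof.
rewrite /ff (bigD1R i) [in RHS](bigD1R i) {1}/upd ffunE eqxx.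
have -> : \big[Rplus/0]_(j | j != i) gq (upd x i v j) = \big[Rplus/0]_(j | j != i) gq (x j).
  by apply: eq_bigr => j /negbTE ji; rewrite /upd ffunE ji.
ring.
Qed.

Definition NN : R := INR n * (INR q - 1).

Lemma Pf x : \big[Rplus/0]_y (hp x y * ff y) = / NN * (ff x * (NN - INR q)).
Proof.
rewrite hp_sum -/NN; congr (_ * _).
have E i : \big[Rplus/0]_v (if v != x i then ff (upd x i v) else 0) =
    (INR q * ff x - ff x) + (- INR q) * gq (x i) + 0 * 0.
  rewrite (sumif' (x i) (fun v => ff (upd x i v))) ff_upd.
  have E2 v : ff (upd x i v) = (ff x - gq (x i)) + 1 * gq v + 0 * 0 by rewrite ff_upd; ring.
  rewrite (eq_bigr _ (fun v _ => E2 v)) (sum_lin _ _ _ gq (fun _ => 0)) sum_g card_ord sum_const; ring.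
rewrite (eq_bigr _ (fun i _ => E i)) (sum_lin _ _ _ (fun i => gq (x i)) (fun _ => 0)) -/(ff x) card_ord sum_const /NN; ring.
Qed.

Definition ss x : R := \big[Rplus/0]_i gq (x i) ^ 2.

Lemma Pf2 x : \big[Rplus/0]_y (hp x y * ff y ^ 2) =
  / NN * (ff x ^ 2 * (NN - 2 * INR q) + INR q * ss x + INR n * INR q * (INR q - 1)).
Proof.
rewrite hp_sum -/NN; congr (_ * _).
have E i : \big[Rplus/0]_v (if v != x i then ff (upd x i v) ^ 2 else 0) =
    (INR q * ff x ^ 2 + INR q * (INR q - 1) - ff x ^ 2) + (- 2 * INR q * ff x) * gq (x i)
     + INR q * gq (x i) ^ 2.
  rewrite (sumif' (x i) (fun v => ff (upd x i v) ^ 2)) ff_upd.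
  have E2 v : ff (upd x i v) ^ 2 = (ff x - gq (x i)) ^ 2 + (2 * (ff x - gq (x i))) * gq v
     + 1 * gq v ^ 2 by rewrite ff_upd; ring.
  rewrite (eq_bigr _ (fun v _ => E2 v)) (sum_lin _ _ _ gq (fun v => gq v ^ 2)) sum_g sum_g2 card_ord; ring.
rewrite (eq_bigr _ (fun i _ => E i)) (sum_lin _ _ _ (fun i => gq (x i)) (fun i => gq (x i) ^ 2)) -/(ff x) -/(ss x) card_ord /NN; ring.
Qed.

Lemma P1 x : \big[Rplus/0]_y (hp x y * 1) = / NN * NN.
Proof.
rewrite hp_sum -/NN; congr (_ * _).
have E i : \big[Rplus/0]_v (if v != x i then 1 else 0) = (INR q - 1) + 0 * 0 + 0 * 0.
  rewrite (sumif' (x i) (fun v => 1)) sum_const card_ord; ring.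
rewrite (eq_bigr _ (fun i _ => E i)) (sum_lin _ _ _ (fun _ => 0) (fun _ => 0)) card_ord sum_const /NN; ring.
Qed.

Lemma hp_sym x y : hp x y = hp y x.
Proof.
rewrite /hp /hadj; have -> : [set i | x i != y i] = [set i | y i != x i].
  by apply/setP => i; rewrite !inE eq_sym.
by [].
Qed.

Hypothesis HN : 0 < NN.

Lemma hp_ge0 x y : 0 <= hp x y.
Proof.
rewrite /hp; case: hadj; last lra.
by apply: Rlt_le; apply: Rinv_0_lt_compat; exact: HN.
Qed.

Lemma hpkS t x y : hpk t.+1 x y = \big[Rplus/0]_z (hpk t x z * hp z y).
Proof. by []. Qed.

Lemma hpk_ge0 t x y : 0 <= hpk t x y.
Proof.
elim: t y => [|t IH] y.
  by rewrite /=; case: eqP => _; lra.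
rewrite hpkS; apply: sum_ge0 => z; apply: Rmult_le_pos; [exact: IH | exact: hp_ge0].
Qed.

Definition Ew (w : HX n q -> R) (F : HX n q -> R) : R := \big[Rplus/0]_x (w x * F x).

Lemma Ew_ext w F G : (forall x, F x = G x) -> Ew w F = Ew w G.
Proof. by move=> H; apply: eq_bigr => x _; rewrite H. Qed.

Lemma Ew_lin w a b c F G : Ew w (fun x => a + b * F x + c * G x) =
  a * Ew w (fun _ => 1) + b * Ew w F + c * Ew w G.
Proof.
rewrite /Ew.
have E x : w x * (a + b * F x + c * G x) = a * (w x * 1) + b * (w x * F x) + c * (w x * G x)
  by ring.
by rewrite (eq_bigr _ (fun x _ => E x)) !big_split /= -!big_distrr.
Qed.

Lemma Ew_le w F G : (forall x, 0 <= w x) -> (forall x, F x <= G x) -> Ew w F <= Ew w G.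
Proof.
move=> Hw H; apply: sum_le => x; apply: Rmult_le_compat_l; [exact: Hw | exact: H].
Qed.

Definition nu t : HX n q -> R := @hnu n q Hq t.

Lemma nu_ge0 t x : 0 <= nu t x.
Proof. exact: hpk_ge0. Qed.

Lemma E_S t F : Ew (nu t.+1) F = Ew (nu t) (fun z => \big[Rplus/0]_y (hp z y * F y)).
Proof.
rewrite /Ew /nu /hnu.
under eq_bigr => y _ do rewrite hpkS big_distrl /=.
rewrite exchange_big /=; apply: eq_bigr => z _.
rewrite big_distrr /=; apply: eq_bigr => y _; ring.
Qed.

Lemma E_0 F : Ew (nu 0) F = F (horigin n Hq).
Proof.
rewrite /Ew /nu /hnu /=.
rewrite -(sumif (horigin n Hq) F); apply: eq_bigr => y _.
rewrite eq_sym; case: eqP => _; ring.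
Qed.

Lemma E_1 t : Ew (nu t) (fun _ => 1) = 1.
Proof.
elim: t => [|t IH]; first by rewrite E_0.
rewrite E_S -{2}IH; apply: Ew_ext => x; rewrite P1; field; lra.
Qed.

Lemma ff_origin : ff (horigin n Hq) = NN.
Proof.
rewrite /ff (eq_bigr (fun _ => INR q - 1)); first by rewrite sum_const card_ord.
by move=> i _; rewrite /horigin ffunE /gq.
Qed.

Definition lam := (NN - INR q) / NN.
Definition lam2 := (NN - 2 * INR q) / NN.

Lemma E_f t : Ew (nu t) ff = lam ^ t * NN.
Proof.
elim: t => [|t IH]; first by rewrite E_0 ff_origin /=; ring.
rewrite E_S (@Ew_ext _ _ (fun x => 0 + lam * ff x + 0 * ff x)).
  rewrite Ew_lin IH /=; ring.
move=> x; rewrite Pf /lam; field; lra.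
Qed.

Hypothesis q2 : 2 <= INR q.
Hypothesis N2q : 2 * INR q <= NN.

Lemma gq2_le v : gq v ^ 2 <= (INR q - 1) ^ 2.
Proof. rewrite /gq; case: eqP => _; nra. Qed.

Lemma ss_le x : ss x <= INR n * (INR q - 1) ^ 2.
Proof.
apply: (Rle_trans _ (\big[Rplus/0]_(i : 'I_n) (INR q - 1) ^ 2)).
  rewrite /ss; apply: sum_le => i; exact: gq2_le.
by rewrite sum_const card_ord; right.
Qed.

Lemma Pf2_le x : \big[Rplus/0]_y (hp x y * ff y ^ 2) <=
   INR q ^ 2 + lam2 * ff x ^ 2 + 0 * ff x.
Proof.
rewrite Pf2.
have H1 := ss_le x.
have Hn : 0 <= INR n := pos_INR n.
have E : / NN * (ff x ^ 2 * (NN - 2 * INR q) + INR q * ss x + INR n * INR q * (INR q - 1))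
   = lam2 * ff x ^ 2 + (INR q * ss x + INR n * INR q * (INR q - 1)) / NN.
  rewrite /lam2; field; lra.
rewrite E.
have : (INR q * ss x + INR n * INR q * (INR q - 1)) / NN <= INR q ^ 2.
  apply: (Rmult_le_reg_r NN) => //.
  rewrite /Rdiv Rmult_assoc Rinv_l; last lra.
  rewrite /NN; nra.
lra.
Qed.

Definition V := INR q * NN / 2.

Lemma lam2_ge0 : 0 <= lam2.
Proof.
rewrite /lam2 /Rdiv; apply: Rmult_le_pos; first lra.
by apply: Rlt_le; apply: Rinv_0_lt_compat.
Qed.

Lemma E_f2 t : Ew (nu t) (fun x => ff x ^ 2) <= lam2 ^ t * NN ^ 2 + V.
Proof.
elim: t => [|t IH].
  rewrite E_0 ff_origin /V /=.
  have : 0 <= INR q * NN by nra.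
  lra.
rewrite E_S.
apply: Rle_trans (Ew_le (@nu_ge0 t) Pf2_le) _.
have -> : lam2 ^ t.+1 = lam2 * lam2 ^ t by [].
rewrite Ew_lin E_1.
have L := lam2_ge0.
have := Rmult_le_compat_l _ _ _ L IH.
have : lam2 * V + INR q ^ 2 = V.
  rewrite /lam2 /V; field; lra.
lra.
Qed.

Definition pi := @hpi n q.

Lemma pi_ge0 x : 0 <= pi x.
Proof.
rewrite /pi /hpi; apply: Rlt_le; apply: Rinv_0_lt_compat; apply: lt_0_INR.
apply/ltP; by rewrite expn_gt0 Hq.
Qed.

Lemma pi_1 : Ew pi (fun _ => 1) = 1.
Proof.
rewrite /Ew (eq_bigr (fun _ => / INR (q ^ n))); last by move=> x _; rewrite /pi /hpi; ring.
rewrite sum_const card_ffun !card_ord; field.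
apply: not_0_INR; apply/eqP; by rewrite -lt0n expn_gt0 Hq.
Qed.

Lemma pi_P F : Ew pi (fun z => \big[Rplus/0]_y (hp z y * F y)) = Ew pi F.
Proof.
rewrite /Ew.
under eq_bigr => x _ do rewrite big_distrr /=.
rewrite exchange_big /=; apply: eq_bigr => y _.
have E x : pi x * (hp x y * F y) = (pi y * F y) * (hp y x * 1).
  by rewrite hp_sym /pi /hpi; ring.
rewrite (eq_bigr _ (fun x _ => E x)) -big_distrr /= P1; field; lra.
Qed.

Lemma pi_f2 : Ew pi (fun x => ff x ^ 2) <= V.
Proof.
have H : Ew pi (fun x => ff x ^ 2) <= INR q ^ 2 + lam2 * Ew pi (fun x => ff x ^ 2).
  rewrite -{1}pi_P.
  apply: Rle_trans (Ew_le pi_ge0 Pf2_le) _.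
  rewrite Ew_lin pi_1; lra.
have Hl : 1 - lam2 = 2 * INR q / NN by rewrite /lam2; field; lra.
have H2 : (1 - lam2) * Ew pi (fun x => ff x ^ 2) <= INR q ^ 2 by lra.
rewrite Hl in H2.
apply: (Rmult_le_reg_l (2 * INR q / NN)).
  apply: Rdiv_lt_0_compat; lra.
apply: Rle_trans H2 _; rewrite /V; right; field; lra.
Qed.

End Walk.

Definition Rltb (a b : R) : bool := if Rlt_dec a b then true else false.

Lemma bigmax_ge (T : eqType) (r : seq T) (F : T -> R) x : x \in r ->
  F x <= \big[Rmax/0]_(i <- r) F i.
Proof.
elim: r => [|y r IH] //; rewrite inE big_cons => /orP [/eqP ->|/IH H].
  exact: Rmax_l.
apply: Rle_trans H _; exact: Rmax_r.
Qed.

Lemma TV_ge n q (mu nu : HX n q -> R) S : TV mu nu >= Rabs (hmeas mu S - hmeas nu S).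
Proof.
apply: Rle_ge; rewrite /TV.
exact: (@bigmax_ge _ (index_enum _) (fun S => Rabs (hmeas mu S - hmeas nu S)) S (mem_index_enum S)).
Qed.

Lemma hmeasE n q (w : HX n q -> R) S : hmeas w S = Ew w (fun x => if x \in S then 1 else 0).
Proof.
rewrite /hmeas /Ew big_mkcond; apply: eq_bigr => x _; case: (x \in S); ring.
Qed.

Section Main.
Variables (n q : nat).
Hypothesis Hq : (0 < q)%N.
Hypothesis HN : 0 < NN n q.
Hypothesis q2 : 2 <= INR q.
Hypothesis N2q : 2 * INR q <= NN n q.

Lemma TV_main t : 0 < lam n q ^ t * NN n q ->
  TV (@hnu n q Hq t) (@hpi n q) >= 1 - 4 * INR q * NN n q / (lam n q ^ t * NN n q) ^ 2.
Proof.
set m := lam n q ^ t * NN n q => Hm.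
pose S := [set x : HX n q | Rltb (m / 2) (ff x)].
apply: Rge_trans (TV_ge _ _ S) _.
rewrite !hmeasE.
have ind_lo x : -3 + 8 / m * ff x + (- 4 / m ^ 2) * ff x ^ 2 <= (if x \in S then 1 else 0).
  have -> : -3 + 8 / m * ff x + (- 4 / m ^ 2) * ff x ^ 2 = 1 - 4 * (ff x / m - 1) ^ 2.
    field; lra.
  rewrite /S inE /Rltb; case: Rlt_dec => H /=; first (have := pow2_ge_0 (ff x / m - 1); lra).
  have : ff x / m <= 1 / 2.
    apply: (Rmult_le_reg_r m) => //.
    have -> : ff x / m * m = ff x by field; lra.
    lra.
  nra.
have ind_hi x : (if x \in S then 1 else 0) <= 0 + 0 * ff x + (4 / m ^ 2) * ff x ^ 2.
  have -> : 0 + 0 * ff x + (4 / m ^ 2) * ff x ^ 2 = 4 * (ff x / m) ^ 2 by field; lra.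
  rewrite /S inE /Rltb; case: Rlt_dec => H /=; last nra.
  have : 1 / 2 < ff x / m.
    apply: (Rmult_lt_reg_r m) => //.
    have -> : ff x / m * m = ff x by field; lra.
    lra.
  nra.
have L1 := Ew_le (nu_ge0 Hq HN t) ind_lo.
have L2 := Ew_le (@pi_ge0 n q Hq) ind_hi.
rewrite !Ew_lin (E_1 Hq HN) (E_f Hq HN) (@pi_1 n q Hq) in L1 L2.
have F2 := E_f2 Hq HN q2 N2q t.
have P2 := @pi_f2 n q Hq HN q2.
have Hl2 : lam2 n q ^ t * NN n q ^ 2 <= m ^ 2.
  rewrite /m Rpow_mult_distr; apply: Rmult_le_compat_r; first nra.
  have -> : (lam n q ^ t) ^ 2 = (lam n q * lam n q) ^ t by rewrite Rpow_mult_distr /=; ring.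
  apply: pow_incr; split; first exact: lam2_ge0 HN N2q.
  rewrite /lam /lam2; apply: (Rmult_le_reg_r (NN n q ^ 2)); first nra.
  have -> : (NN n q - 2 * INR q) / NN n q * NN n q ^ 2 = (NN n q - 2 * INR q) * NN n q.
    field; lra.
  have -> : (NN n q - INR q) / NN n q * ((NN n q - INR q) / NN n q) * NN n q ^ 2 = (NN n q - INR q) ^ 2.
    field; lra.
  nra.
have Hm2 : 0 < m ^ 2 by nra.
have A1 : 4 / m ^ 2 * Ew (@nu n q Hq t) (fun x => ff x ^ 2) <= 4 / m ^ 2 * (m ^ 2 + V n q).
  apply: Rmult_le_compat_l; first (apply: Rlt_le; apply: Rdiv_lt_0_compat; lra).
  lra.
have A2 : 4 / m ^ 2 * Ew (@pi n q) (fun x => ff x ^ 2) <= 4 / m ^ 2 * V n q.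
  apply: Rmult_le_compat_l; first (apply: Rlt_le; apply: Rdiv_lt_0_compat; lra).
  lra.
have E1 : 4 / m ^ 2 * (m ^ 2 + V n q) = 4 + 4 * V n q / m ^ 2 by field; lra.
have E2 : 8 / m * m = 8 by field; lra.
have E3 : 4 * INR q * NN n q / m ^ 2 = 8 * V n q / m ^ 2 by rewrite /V; field; lra.
have E4 : 4 / m ^ 2 * V n q = 4 * V n q / m ^ 2 by field; lra.
rewrite E3.
apply: Rle_ge; apply: Rle_trans (Rle_abs _).
rewrite /nu /pi in L1 L2 A1 A2 *.
rewrite E2 in L1.
lra.
Qed.

End Main.



Unset Implicit Arguments.

Lemma exp_le' a b : a <= b -> exp a <= exp b.
Proof. intros [H|H]; [left; now apply exp_increasing | right; now subst]. Qed.

Lemma exp_pow a t : exp a ^ t = exp (INR t * a).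
Proof.
induction t as [|t IH]; simpl pow.
- simpl INR; by rewrite Rmult_0_l exp_0.
- rewrite IH S_INR -exp_plus; f_equal; ring.
Qed.

Lemma ln_le_sqrt N : 0 < N -> ln N <= 2 * sqrt N.
Proof.
intros HN. set s := sqrt N.
assert (Hs : 0 < s) by (apply sqrt_lt_R0; lra).
assert (E : N = s * s) by (unfold s; rewrite sqrt_sqrt; lra).
rewrite E ln_mult; try lra.
assert (ln s < s).
{ rewrite -{2}(ln_exp s). apply ln_increasing; auto.
  pose proof (exp_ineq1_le s); lra. }
lra.
Qed.

Lemma asym (Q c eps N : R) (t : nat) :
  2 <= Q -> 0 < c -> 0 < eps -> 2 * Q <= N -> exp c <= N ->
  (4 * Q / Rmin (1/2) (eps / (8 * Q * exp (- c)))) ^ 2 <= N ->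
  INR t <= N / (2 * Q) * (ln N - c) ->
  4 * Q * N / (((N - Q) / N) ^ t * N) ^ 2 <= 4 * Q * exp (- c) + eps.
Proof.
intros HQ Hc Heps HN2 HNc HNd Ht.
assert (HN : 0 < N) by lra.
set x := Q / N.
assert (Hx0 : 0 < x) by (unfold x; apply Rdiv_lt_0_compat; lra).
assert (Hx : x <= 1/2).
{ unfold x. apply (Rmult_le_reg_r N); auto. field_simplify; lra. }
assert (HlnN : c <= ln N).
{ destruct (Rle_or_lt c (ln N)) as [H|H]; auto.
  apply exp_increasing in H. rewrite exp_ln in H; lra. }
assert (Elam : (N - Q) / N = 1 - x) by (unfold x; field; lra).
rewrite Elam.
set y := x + 2 * x ^ 2.
assert (Hlam : exp (- y) <= 1 - x).
{ rewrite exp_Ropp. pose proof (exp_ineq1_le y). pose proof (exp_pos y).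
  assert (H1 : 1 <= (1 - x) * exp y).
  { apply Rle_trans with ((1 - x) * (1 + y)).
    - unfold y; nra.
    - apply Rmult_le_compat_l; lra. }
  apply (Rmult_le_reg_r (exp y)); auto.
  rewrite Rinv_l; lra. }
assert (Ht2 : 2 * INR t * x <= ln N - c).
{ assert (E : 2 * x * (N / (2 * Q) * (ln N - c)) = ln N - c) by (unfold x; field; lra).
  rewrite -E. pose proof (pos_INR t). nra. }
assert (Hpow : exp (- y) ^ t <= (1 - x) ^ t).
{ apply pow_incr; split; auto. left; apply exp_pos. }
rewrite exp_pow in Hpow.
set d := 2 * x * ln N.
assert (Hd0 : 0 <= d) by (unfold d; nra).
assert (Hlow : N * exp (c - d) <= ((1 - x) ^ t * N) ^ 2).
{ assert (E1 : ((1 - x) ^ t * N) ^ 2 = N ^ 2 * ((1 - x) ^ t) ^ 2) by ring.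
  rewrite E1.
  assert (H2 : exp (INR t * - y) ^ 2 <= ((1 - x) ^ t) ^ 2).
  { apply pow_incr; split; auto. left; apply exp_pos. }
  rewrite exp_pow in H2.
  assert (H3 : exp (- ln N + (c - d)) <= exp (INR 2 * (INR t * - y))).
  { apply exp_le'. unfold y, d. simpl INR.
    assert (2 * INR t * x * (1 + 2 * x) <= (ln N - c) * (1 + 2 * x)) by nra.
    nra. }
  rewrite exp_plus exp_Ropp exp_ln in H3; last lra.
  apply Rle_trans with (N ^ 2 * exp (INR 2 * (INR t * - y))).
  - apply Rle_trans with (N ^ 2 * (/ N * exp (c - d))).
    + right; field; lra.
    + apply Rmult_le_compat_l; [nra | auto].
  - apply Rmult_le_compat_l; [nra | auto]. }
set d0 := Rmin (1/2) (eps / (8 * Q * exp (- c))).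
assert (Hec : 0 < exp (- c)) by apply exp_pos.
assert (Hd0pos : 0 < d0).
{ unfold d0; apply Rmin_pos; [lra | apply Rdiv_lt_0_compat; nra]. }
assert (Hdd0 : d <= d0).
{ assert (Hs : 4 * Q / d0 <= sqrt N).
  { rewrite -(sqrt_pow2 (4 * Q / d0)).
    - apply sqrt_le_1; auto; [apply pow2_ge_0 | lra].
    - apply Rlt_le; apply Rdiv_lt_0_compat; lra. }
  pose proof (ln_le_sqrt N HN) as Hl.
  assert (Hsq : 0 < sqrt N) by (apply sqrt_lt_R0; lra).
  assert (EN : N = sqrt N * sqrt N) by (rewrite sqrt_sqrt; lra).
  assert (d <= 4 * Q / sqrt N).
  { unfold d, x. apply Rle_trans with (2 * (Q / N) * (2 * sqrt N)).
    - apply Rmult_le_compat_l; auto. apply Rlt_le. apply Rmult_lt_0_compat; [lra | exact Hx0].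
    - right. rewrite {1}EN. field; lra. }
  assert (4 * Q / sqrt N <= d0).
  { apply (Rmult_le_reg_r (sqrt N)); auto.
    assert (E2 : 4 * Q / sqrt N * sqrt N = 4 * Q) by (field; lra).
    rewrite E2.
    apply (Rmult_le_reg_r (/ d0)). apply Rinv_0_lt_compat; auto.
    assert (E3 : d0 * sqrt N * / d0 = sqrt N) by (field; lra).
    rewrite E3. exact Hs. }
  lra. }
assert (Hd12 : d <= 1/2) by (apply Rle_trans with d0; auto; apply Rmin_l).
assert (Hde : d <= eps / (8 * Q * exp (- c))) by (apply Rle_trans with d0; auto; apply Rmin_r).
assert (Hexpd : exp d <= 1 + 2 * d).
{ pose proof (exp_ineq1_le (- d)). rewrite exp_Ropp in H.
  pose proof (exp_pos d).
  assert (H1 : (1 - d) * exp d <= 1).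
  { apply Rle_trans with (/ exp d * exp d).
    - apply Rmult_le_compat_r; lra.
    - right; field; lra. }
  nra. }
assert (Hm : 0 < N * exp (c - d)) by (apply Rmult_lt_0_compat; auto; apply exp_pos).
apply Rle_trans with (4 * Q * N / (N * exp (c - d))).
- unfold Rdiv. apply Rmult_le_compat_l; [nra|]. apply Rinv_le_contravar; auto.
- assert (E : 4 * Q * N / (N * exp (c - d)) = 4 * Q * exp (- c) * exp d).
  { unfold Rminus. rewrite exp_plus !exp_Ropp. field; repeat split; (apply: Rgt_not_eq; apply: exp_pos) || lra. }
  rewrite E.
  assert (H8 : 8 * Q * exp (- c) * d <= eps).
  { apply (Rmult_le_reg_r (/ (8 * Q * exp (- c)))).
    - apply Rinv_0_lt_compat; nra.
    - assert (E2 : 8 * Q * exp (- c) * d * / (8 * Q * exp (- c)) = d) by (field; split; lra).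
      rewrite E2. exact Hde. }
  assert (4 * Q * exp (- c) * exp d <= 4 * Q * exp (- c) * (1 + 2 * d)).
  { apply Rmult_le_compat_l; [nra|auto]. }
  nra.
Qed.


Lemma floorN_le r : 0 <= r -> INR (floorN r) <= r.
Proof.
move=> Hr; rewrite /floorN.
have [H _] := base_Int_part r.
move: H; case: (Int_part r) => [|p|p] H /=.
- simpl; lra.
- rewrite INR_IZR_INZ positive_nat_Z; exact: H.
- simpl; lra.
Qed.

Theorem corollary4p5 (q : nat) (hq : (2 <= q)%N) (c : R) (hc : 0 < c) :
  let a := fun n : nat => INR n * (INR q - 1) / (2 * INR q) * ln (INR n * (INR q - 1)) in
  let b := fun n : nat => INR n * (INR q - 1) / (2 * INR q) in
  forall eps : R, 0 < eps ->
  exists N : nat, forall n : nat, (N <= n)%nat ->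
    TV (@hnu n q (ltnW hq) (floorN (a n - c * b n))) (@hpi n q)
      >= 1 - 4 * INR q * exp (- c) - eps.
Proof.
move=> a b eps Heps.
have q2 : 2 <= INR q.
  have := le_INR 2 q (elimT leP hq); rewrite /=; lra.
have [d0 Ed0] : exists d0, d0 = Rmin (1/2) (eps / (8 * INR q * exp (- c))) by eexists.
have [K EK] : exists K, K = 2 * INR q + exp c + (4 * INR q / d0) ^ 2 + 1 by eexists.
have H1 := exp_pos c; have H2 := pow2_ge_0 (4 * INR q / d0).
have HK : 0 < K by lra.
have [Hup1 _] := archimed K.
have Hup0 : (0 <= up K)%Z by apply: le_IZR; lra.
exists (Z.to_nat (up K)) => n Hn.
have HnK : K < INR n.
  have := le_INR _ _ (elimT leP Hn).
  rewrite INR_IZR_INZ Z2Nat.id //; lra.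
have Hn0 : 0 <= INR n := pos_INR n.
have HNn : INR n <= NN n q by rewrite /NN; nra.
have HN : 0 < NN n q by lra.
have N2q : 2 * INR q <= NN n q by lra.
have HNc : exp c <= NN n q by lra.
have HNd : (4 * INR q / d0) ^ 2 <= NN n q by lra.
have HlnN : c <= ln (NN n q).
  case: (Rle_or_lt c (ln (NN n q))) => // H.
  have := exp_increasing _ _ H; rewrite exp_ln //; lra.
have Er : a n - c * b n = NN n q / (2 * INR q) * (ln (NN n q) - c).
  rewrite /a /b /NN; ring.
have Ht : INR (floorN (a n - c * b n)) <= NN n q / (2 * INR q) * (ln (NN n q) - c).
  rewrite Er; apply: floorN_le; apply: Rmult_le_pos; last lra.
  apply: Rlt_le; apply: Rdiv_lt_0_compat; lra.
have Hlam : 0 < lam n q.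
  rewrite /lam; apply: Rdiv_lt_0_compat; lra.
have Hm : 0 < lam n q ^ (floorN (a n - c * b n)) * NN n q.
  by apply: Rmult_lt_0_compat => //; apply: pow_lt.
have T := TV_main (ltnW hq) HN q2 N2q Hm.
rewrite Ed0 in HNd.
have A := asym _ _ _ _ _ q2 hc Heps N2q HNc HNd Ht.
rewrite /lam in T.
lra.
Qed.
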